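(* Let $M,K\ge2$, $Q\ge1$. Consider the family $\mathcal{I}$ of inequalities, indexed by $z\in[Q]$ and tuples $(\mathcal{V}^{(1)},\dots,\mathcal{V}^{(K)})$ of non-empty subsets of $[M]$ with $\mathcal{V}^{(k)}\ne[M]$ for at least one $k$, $$P'\big(Y(x_1)\in\mathcal{V}^{(1)},\dots,Y(x_K)\in\mathcal{V}^{(K)}\big)\le \sum_{k=1}^K P\big(X=k,\,Y\in\mathcal{V}^{(k)}\mid Z=z\big),$$ in the unknowns $P'$ (a distribution on $[M]^K$) and $P(\cdot,\cdot\mid Z=z)$ (distributions on $[K]\times[M]$, $z\in[Q]$). Let $\mathcal{S}\subseteq\mathcal{I}$ consist of those inequalities whose tuple satisfies either (1) there exist $k\ne k^*$ with $\mathcal{V}^{(k)}\ne[M]$ and $\mathcal{V}^{(k^* )}\ne[M]$; or (2) there exist $k^*\in[K]$ and $m\in[M]$ such that $\mathcal{V}^{(k^* )}=[M]\setminus\{m\}$ and $\mathcal{V}^{(k)}=[M]$ for all $k\ne k^*$. Then $\mathcal{S}$ is equivalent to $\mathcal{I}$ (they define the same set of $(P',P(\cdot,\cdot\mid Z))$), $\mathcal{S}$ is non-redundant, and $\mathcal{S}$ has $QK(2^M-M-2)$ fewer inequalities than $\mathcal{I}$.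
   Context: Notation $[n]=\{1,\dots,n\}$. For each fixed $z\in[Q]$, the inequalities with index $z$, together with the constraints that $P'$ and $P(\cdot,\cdot\mid Z=z)$ are probability distributions, define a polytope of pairs $(P',P(\cdot,\cdot\mid Z=z))$. Relative to a set of inequalities, an individual inequality is redundant if it is implied by the remaining inequalities of the set (and the probability-simplex constraints); a set is non-redundant if none of its inequalities is redundant. (The family $\mathcal{I}$ characterizes exactly the pairs of joint counterfactual distribution of $(Y(x_1),\dots,Y(x_K))$ and observed distributions $P(X,Y\mid Z)$ compatible with standard instrumental variable models with $Y\in[M]$, $X\in[K]$, $Z\in[Q]$.) *)

(* Defs.v *)
From HB Require Import structures.
From mathcomp Require Import all_boot all_order all_algebra.
Set Implicit Arguments. Unset Strict Implicit. Unset Printing Implicit Defensive.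
Import Order.TTheory GRing.Theory Num.Theory.
Local Open Scope ring_scope.

(* Y takes values in 'I_M (= [M]), X in 'I_K (= [K]), Z in 'I_Q (= [Q]).
   A tuple (V^(1),...,V^(K)) of subsets of [M] is V : {ffun 'I_K -> {set 'I_M}}.
   The joint counterfactual outcome (Y(x_1),...,Y(x_K)) is y : {ffun 'I_K -> 'I_M}. *)

Definition is_distr (R : realFieldType) (T : finType) (p : {ffun T -> R}) : Prop :=
  (forall t, 0 <= p t) /\ \sum_t p t = 1.

Definition tupleI (M K : nat) (V : {ffun 'I_K -> {set 'I_M}}) : bool :=
  [forall k, V k != set0] && [exists k, V k != setT].

Definition tupleS (M K : nat) (V : {ffun 'I_K -> {set 'I_M}}) : bool :=
  tupleI V &&
  ([exists k, exists k', [&& k != k', V k != setT & V k' != setT]]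
   || [exists k, exists m, (V k == [set~ m]) &&
                           [forall k', (k' != k) ==> (V k' == setT)]]).

Definition famI (M K Q : nat) : {set 'I_Q * {ffun 'I_K -> {set 'I_M}}} :=
  [set zV | tupleI zV.2].
Definition famS (M K Q : nat) : {set 'I_Q * {ffun 'I_K -> {set 'I_M}}} :=
  [set zV | tupleS zV.2].

Definition ineq_holds (R : realFieldType) (M K : nat)
  (P' : {ffun {ffun 'I_K -> 'I_M} -> R}) (p : {ffun 'I_K * 'I_M -> R})
  (V : {ffun 'I_K -> {set 'I_M}}) : Prop :=
  \sum_(y : {ffun 'I_K -> 'I_M} | [forall k, y k \in V k]) P' y <= \sum_k \sum_(m in V k) p (k, m).

(* Main.v *)
Require Import Defs.
From HB Require Import structures.
From mathcomp Require Import all_boot all_order all_algebra.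
From mathcomp Require Import lra zify ring.
Set Implicit Arguments. Unset Strict Implicit. Unset Printing Implicit Defensive.
Import Order.TTheory GRing.Theory Num.Theory.
Local Open Scope ring_scope.

Section Gen.
Variable R : realFieldType.

Lemma prod01 (I : finType) (F : I -> R) (P : pred I) :
  (forall i, 0 <= F i <= 1) -> 0 <= \prod_(i | P i) F i <= 1.
Proof.
move=> h; apply/andP; split; first by apply: prodr_ge0 => i _; case/andP: (h i).
by apply: prodr_ile1 => i _; apply: h.
Qed.

Lemma prod_le_factor (I : finType) (F : I -> R) (j : I) :
  (forall i, 0 <= F i <= 1) -> \prod_i F i <= F j.
Proof.
move=> h; rewrite (bigD1 j) //=.
have /andP[h0 h1] := h j.
have /andP[p0 p1] := prod01 (fun i => i != j) h.
by rewrite -[leRHS]mulr1 ler_wpM2l.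
Qed.

Lemma prod_le_two (I : finType) (F : I -> R) (i j : I) :
  i != j -> (forall i, 0 <= F i <= 1) -> \prod_i F i <= F i * F j.
Proof.
move=> ij h; rewrite (bigD1 i) //= (bigD1 j) 1?eq_sym //= mulrA.
have /andP[h0 h1] := h i; have /andP[g0 g1] := h j.
have /andP[p0 p1] := prod01 (fun k => (k != i) && (k != j)) h.
by rewrite -[leRHS]mulr1 ler_wpM2l // mulr_ge0.
Qed.

Lemma prod_le_factorP (I : finType) (F : I -> R) (Pd : pred I) (j : I) :
  (forall i, 0 <= F i <= 1) -> Pd j -> \prod_(i | Pd i) F i <= F j.
Proof.
move=> h pj; rewrite (bigD1 j) //=.
have /andP[h0 h1] := h j.
have /andP[p0 p1] := prod01 (fun i => Pd i && (i != j)) h.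
by rewrite -[leRHS]mulr1 ler_wpM2l.
Qed.

Lemma sum_ge_term (I : finType) (F : I -> R) (j : I) :
  (forall i, 0 <= F i) -> F j <= \sum_i F i.
Proof.
move=> h; rewrite (bigD1 j) //= lerDl; exact: sumr_ge0.
Qed.

Lemma box_sum (M K : nat) (W : {ffun 'I_K -> {set 'I_M}}) (F : 'I_K -> 'I_M -> R) :
  \sum_(y : {ffun 'I_K -> 'I_M} | [forall k, y k \in W k]) \prod_k F k (y k)
  = \prod_k \sum_(m in W k) F k m.
Proof.
rewrite (eq_bigr (fun k => \sum_m (if m \in W k then F k m else 0))); last first.
  by move=> k _; rewrite big_mkcond.
rewrite bigA_distr_bigA /= big_mkcond /=; apply: eq_bigr => y _.
case: ifP => [/forallP hy | /negbT].
  by apply: eq_bigr => k _; rewrite hy.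
rewrite negb_forall => /existsP [k hk].
by rewrite (bigD1 k) //= (negbTE hk) mul0r.
Qed.

Lemma sum_ind (M : nat) (W V : {set 'I_M}) :
  \sum_(m in W) ((m \in V)%:R : R) = #|W :&: V|%:R.
Proof.
rewrite -sumr_const big_mkcond [RHS]big_mkcond /=; apply: eq_bigr => m _.
by rewrite inE; case: (m \in W); case: (m \in V).
Qed.

Lemma frac_bounds (a n M : nat) : (0 < n)%N -> (n <= M)%N -> (a <= n)%N ->
  [/\ 0 <= (a%:R / n%:R : R), a%:R / n%:R <= 1 :> R,
      ((a < n)%N -> a%:R / n%:R <= 1 - M%:R^-1 :> R) &
      ((0 < a)%N -> M%:R^-1 <= a%:R / n%:R :> R)].
Proof.
move=> n0 nM an.
have n0' : 0 < n%:R :> R by rewrite ltr0n.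
have M0' : 0 < M%:R :> R by rewrite ltr0n; apply: leq_trans nM.
split.
- by rewrite divr_ge0.
- by rewrite ler_pdivrMr // mul1r ler_nat.
- move=> lt.
  have h1 : a%:R / n%:R <= (n%:R - 1) / n%:R :> R.
    rewrite ler_pM2r ?invr_gt0 //.
    have : (a + 1)%:R <= n%:R :> R by rewrite ler_nat addn1.
    rewrite natrD; lra.
  have h2 : (n%:R - 1) / n%:R = 1 - n%:R^-1 :> R.
    by rewrite mulrBl divff ?mul1r // gt_eqF.
  have h3 : M%:R^-1 <= n%:R^-1 :> R by rewrite lef_pV2 ?posrE // ler_nat.
  lra.
- move=> a0.
  have h3 : M%:R^-1 <= n%:R^-1 :> R by rewrite lef_pV2 ?posrE // ler_nat.
  have : n%:R^-1 <= a%:R / n%:R :> R.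
    by rewrite -[X in X <= _]mul1r ler_pM2r ?invr_gt0 // ler1n.
  lra.
Qed.

End Gen.


Section Equiv.
Variable R : realFieldType.

Lemma sum_compl (T : finType) (F : T -> R) (Pd : pred T) :
  \sum_t F t = 1 -> \sum_(t | Pd t) F t = 1 - \sum_(t | ~~ Pd t) F t.
Proof. by move=> h; rewrite -h [X in _ = X - _](bigID Pd) /= addrK. Qed.

Lemma pair_sum (K M : nat) (p : {ffun 'I_K * 'I_M -> R}) :
  \sum_t p t = \sum_k \sum_m p (k, m).
Proof. by rewrite pair_big /=; apply: eq_bigr => -[]. Qed.

Lemma rhs_compl (K M : nat) (p : {ffun 'I_K * 'I_M -> R}) (W : {ffun 'I_K -> {set 'I_M}}) :
  \sum_t p t = 1 ->
  \sum_k \sum_(m in W k) p (k, m) = 1 - \sum_k \sum_(m | m \notin W k) p (k, m).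
Proof.
rewrite pair_sum => h; apply/eqP; rewrite eq_sym subr_eq -h -big_split /=; apply/eqP.
by apply: eq_bigr => k _; rewrite [LHS](bigID (fun m => m \in W k)).
Qed.

Lemma notS_single (M K : nat) (V : {ffun 'I_K -> {set 'I_M}}) :
  tupleI V -> ~~ tupleS V ->
  exists k, V k != setT /\ forall k', k' != k -> V k' = setT.
Proof.
rewrite /tupleS => hI; rewrite hI /= negb_or => /andP [h1 _].
case/andP: hI => _ /existsP [k hk]; exists k; split => // k' nk.
apply/eqP; apply: contraR h1 => hk'.
by apply/existsP; exists k; apply/existsP; exists k'; rewrite eq_sym nk hk hk'.
Qed.

Definition V2 (M K : nat) (k0 : 'I_K) (m : 'I_M) : {ffun 'I_K -> {set 'I_M}} :=
  [ffun k => if k == k0 then [set~ m] else setT].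

Lemma setC1_neq0 (M : nat) (m : 'I_M) : (2 <= M)%N -> [set~ m] != set0.
Proof.
move=> M2; apply/set0Pn.
have [m' hm'] : exists m' : 'I_M, m' != m.
  have h0 : (0 < M)%N by lia.
  have h1 : (1 < M)%N by lia.
  case: (eqVneq (Ordinal h0) m) => e.
    by exists (Ordinal h1); rewrite -e; apply/eqP => -[].
  by exists (Ordinal h0).
by exists m'; rewrite in_setC1.
Qed.

Lemma V2_S (M K : nat) (k0 : 'I_K) (m : 'I_M) : (2 <= M)%N -> tupleS (V2 k0 m).
Proof.
move=> M2; have hI : tupleI (V2 k0 m).
  apply/andP; split.
    apply/forallP => k; rewrite ffunE; case: ifP => _; first exact: setC1_neq0.
    by apply/set0Pn; exists m; rewrite inE.
  apply/existsP; exists k0; rewrite ffunE eqxx.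
  by apply/negP => /eqP e; move: (in_setT m); rewrite -e setC11.
rewrite /tupleS hI /=; apply/orP; right.
apply/existsP; exists k0; apply/existsP; exists m; rewrite ffunE eqxx eqxx /=.
by apply/forallP => k; apply/implyP => nk; rewrite ffunE (negbTE nk).
Qed.

Lemma V2_ineq (M K : nat) (P' : {ffun {ffun 'I_K -> 'I_M} -> R}) (p : {ffun 'I_K * 'I_M -> R})
  (k0 : 'I_K) (m : 'I_M) : is_distr P' -> is_distr p -> ineq_holds P' p (V2 k0 m) ->
  p (k0, m) <= \sum_(y : {ffun 'I_K -> 'I_M} | y k0 == m) P' y.
Proof.
move=> [_ hP] [_ hp]; rewrite /ineq_holds rhs_compl //.
rewrite (sum_compl _ hP).
rewrite (eq_bigl (fun y : {ffun 'I_K -> 'I_M} => y k0 == m)); last first.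
  move=> y; rewrite -[y k0 == m]negbK; congr (~~ _).
  apply/idP/idP => [/forallP h | h]; first by move: (h k0); rewrite ffunE eqxx in_setC1.
  by apply/forallP => k; rewrite ffunE; case: ifP => [/eqP -> | _]; rewrite ?in_setC1 ?inE.
have e : \sum_k \sum_(m' | m' \notin V2 k0 m k) p (k, m') = p (k0, m).
  rewrite (bigD1 k0) //=.
  have -> : \sum_(k | k != k0) \sum_(m' | m' \notin V2 k0 m k) p (k, m') = 0.
    apply: big1 => k nk; rewrite big_pred0 // => m'; rewrite ffunE (negbTE nk) inE //.
  rewrite addr0 (eq_bigl (pred1 m)) ?big_pred1_eq // => m'.
  by rewrite ffunE eqxx in_setC1 negbK.
rewrite e; lra.
Qed.

Lemma S_implies_I (M K : nat) (P' : {ffun {ffun 'I_K -> 'I_M} -> R}) (p : {ffun 'I_K * 'I_M -> R})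
  (V : {ffun 'I_K -> {set 'I_M}}) : (2 <= M)%N -> is_distr P' -> is_distr p ->
  (forall V', tupleS V' -> ineq_holds P' p V') -> tupleI V -> ineq_holds P' p V.
Proof.
move=> M2 dP dp hS hI.
case hSV: (tupleS V); first exact: hS.
have [k0 [hk0 hfull]] := notS_single hI (negbT hSV).
have key m : p (k0, m) <= \sum_(y : {ffun 'I_K -> 'I_M} | y k0 == m) P' y.
  by apply: V2_ineq => //; apply: hS; apply: V2_S.
case: (dP) => _ hP; case: (dp) => _ hp.
rewrite /ineq_holds rhs_compl // (sum_compl _ hP).
have e : \sum_k \sum_(m' | m' \notin V k) p (k, m') = \sum_(m' | m' \notin V k0) p (k0, m').
  rewrite (bigD1 k0) //=.
  have -> : \sum_(k | k != k0) \sum_(m' | m' \notin V k) p (k, m') = 0.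
    by apply: big1 => k nk; rewrite big_pred0 // => m'; rewrite hfull // inE.
  by rewrite addr0.
rewrite e.
rewrite (eq_bigl (fun y : {ffun 'I_K -> 'I_M} => y k0 \notin V k0)); last first.
  move=> y; rewrite negb_forall; apply/existsP/idP => [[k hk] | h]; last by exists k0.
  by case: (eqVneq k k0) => [ek | nk]; move: hk; rewrite ?ek // hfull // inE.
rewrite (partition_big (fun y : {ffun 'I_K -> 'I_M} => y k0) (fun m => m \notin V k0)) //=.
suff : \sum_(m | m \notin V k0) p (k0, m) <= \sum_(j | j \notin V k0) \sum_(i : {ffun 'I_K -> 'I_M} | (i k0 \notin V k0) && (i k0 == j)) P' i by lra.
apply: ler_sum => m hm; rewrite (eq_bigl (fun y : {ffun 'I_K -> 'I_M} => y k0 == m)); first exact: key.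
by move=> y; case: (eqVneq (y k0) m) => [->|]; rewrite ?hm ?eqxx ?andbF.
Qed.

End Equiv.


Section Type2.
Variable R : realFieldType.

Lemma sum_pick (T : finType) (Pd : pred T) (a : T) (c : R) :
  \sum_(t | Pd t) (t == a)%:R * c = (Pd a)%:R * c.
Proof.
rewrite big_mkcond (bigD1 a) //= big1 ?addr0.
  by case: (Pd a); rewrite ?eqxx ?mul1r ?mul0r.
by move=> t nt; rewrite (negbTE nt) mul0r; case: (Pd t).
Qed.

Lemma sum_pick' (T : finType) (Pd : pred T) (a : T) (G : T -> R) :
  \sum_(t | Pd t) (t == a)%:R * G t = (Pd a)%:R * G a.
Proof.
rewrite (eq_bigr (fun t => (t == a)%:R * G a)); first exact: sum_pick.
by move=> t _; case: eqP => [->|]; rewrite ?mul0r.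
Qed.

Lemma other_elt (M : nat) (m : 'I_M) : (2 <= M)%N -> exists m' : 'I_M, m' != m.
Proof.
move=> M2; have h0 : (0 < M)%N by lia.
have h1 : (1 < M)%N by lia.
case: (eqVneq (Ordinal h0) m) => e.
  by exists (Ordinal h1); rewrite -e; apply/eqP => -[].
by exists (Ordinal h0).
Qed.

Lemma type2 (M K : nat) (k0 : 'I_K) (m : 'I_M) : (2 <= M)%N ->
  exists (P' : {ffun {ffun 'I_K -> 'I_M} -> R}) (p : {ffun 'I_K * 'I_M -> R}),
    [/\ is_distr P', is_distr p,
        (forall V', tupleS V' -> V' <> V2 k0 m -> ineq_holds P' p V')
      & ~ ineq_holds P' p (V2 k0 m)].
Proof.
move=> M2; have [m1 m1m] := other_elt m M2.
have M0 : 0 < M%:R :> R by rewrite ltr0n; lia.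
have iM0 : 0 <= M%:R^-1 :> R by rewrite invr_ge0 ltW.
have iM1 : M%:R^-1 <= 1 :> R by rewrite invf_le1 // ler1n; lia.
have sumM : \sum_(i < M) M%:R^-1 = 1 :> R.
  by rewrite sumr_const card_ord -[M%:R^-1 *+ M]mulr_natl mulfV // gt_eqF.
pose z (i : 'I_M) : {ffun 'I_K -> 'I_M} := [ffun k => if k == k0 then m1 else i].
pose P' : {ffun {ffun 'I_K -> 'I_M} -> R} := [ffun y => \sum_i (y == z i)%:R * M%:R^-1].
pose p : {ffun 'I_K * 'I_M -> R} :=
  [ffun t => (t.1 == k0)%:R * ((t.2 == m)%:R * M%:R^-1 + (t.2 == m1)%:R * (1 - M%:R^-1))].
have LHS (W : {ffun 'I_K -> {set 'I_M}}) :
    \sum_(y : {ffun 'I_K -> 'I_M} | [forall k, y k \in W k]) P' y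
    = \sum_i ([forall k, z i k \in W k])%:R * M%:R^-1.
  rewrite (eq_bigr (fun y => \sum_i (y == z i)%:R * M%:R^-1)); last by move=> y _; rewrite ffunE.
  rewrite exchange_big /=; apply: eq_bigr => i _.
  exact: (sum_pick (fun y : {ffun 'I_K -> 'I_M} => [forall k, y k \in W k])).
have RHS (W : {ffun 'I_K -> {set 'I_M}}) :
    \sum_k \sum_(m' in W k) p (k, m')
    = (m \in W k0)%:R * M%:R^-1 + (m1 \in W k0)%:R * (1 - M%:R^-1).
  rewrite (eq_bigr (fun k => (k == k0)%:R * \sum_(m' in W k)
         ((m' == m)%:R * M%:R^-1 + (m' == m1)%:R * (1 - M%:R^-1)))); last first.
    by move=> k _; rewrite mulr_sumr; apply: eq_bigr => m' _; rewrite ffunE.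
  rewrite (sum_pick' xpredT) /= mul1r big_split /=.
  by rewrite !(sum_pick (fun m' => m' \in W k0)).
have hp0 : forall t, 0 <= p t.
  move=> t; rewrite ffunE mulr_ge0 ?ler0n // addr_ge0 // mulr_ge0 ?ler0n //.
  by rewrite subr_ge0.
have dp : is_distr p.
  split => //; rewrite pair_sum.
  have := RHS [ffun => setT]; rewrite !ffunE !inE /=.
  rewrite (eq_bigr (fun k => \sum_m' p (k, m'))); first by move=> ->; lra.
  by move=> k _; apply: eq_bigl => m'; rewrite ffunE inE.
have dP : is_distr P'.
  split.
    by move=> y; rewrite ffunE; apply: sumr_ge0 => i _; rewrite mulr_ge0 ?ler0n.
  rewrite (eq_bigr (fun y => \sum_i (y == z i)%:R * M%:R^-1)); last by move=> y _; rewrite ffunE.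
  rewrite exchange_big /=.
  rewrite (eq_bigr (fun i => M%:R^-1)).
    by rewrite sumr_const card_ord -[M%:R^-1 *+ M]mulr_natl mulfV // gt_eqF.
  by move=> i _; rewrite (sum_pick xpredT) mul1r.
have zV i : [forall k, z i k \in V2 k0 m k].
  apply/forallP => k; rewrite !ffunE; case: ifP => _; rewrite ?in_setC1 ?inE //.
exists P', p; split => //.
- move=> V' hS' nV; rewrite /ineq_holds LHS RHS.
  have [h1|h1] := boolP (m1 \in V' k0); last first.
    rewrite big1; first by rewrite addr_ge0 // mulr_ge0 ?ler0n // subr_ge0.
    move=> i _; case: forallP => [h|]; last by rewrite mul0r.
    by move: (h k0) h1; rewrite ffunE eqxx => ->.
  have hle : \sum_i ([forall k, z i k \in V' k])%:R * M%:R^-1 <= 1 :> R.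
    apply: (@le_trans _ _ (\sum_(i < M) M%:R^-1)); last by rewrite sumM.
    apply: ler_sum => i _.
    by case: forallP => _ /=; rewrite ?mul1r ?mul0r //; lra.
  have [h2|h2] := boolP (m \in V' k0).
    by move: hle; rewrite /= !mulr1n; lra.
  rewrite /= mulr0n mulr1n mul0r add0r mul1r.
  have : [exists k, (k != k0) && (V' k != setT)].
    apply: contraT => /existsPn hno; exfalso; apply: nV; apply/ffunP => k.
    rewrite ffunE; case: ifP => [/eqP -> | /negbT nk]; last first.
      by move: (hno k); rewrite nk /= negbK => /eqP.
    case/andP: hS' => hI' /orP [/existsP [a /existsP [b /and3P [ab ha hb]]] |
                                /existsP [a /existsP [b /andP [/eqP hab /forallP hall]]]].
      case: (eqVneq a k0) => [ea|na]; last by move: (hno a); rewrite na ha.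
      case: (eqVneq b k0) => [eb|nb]; last by move: (hno b); rewrite nb hb.
      by move: ab; rewrite ea eb eqxx.
    case: (eqVneq a k0) => [ea|na].
      rewrite -ea hab; move: h2; rewrite -ea hab in_setC1 negbK => /eqP -> //.
    by move: (hall k0); rewrite eq_sym na /= => /eqP hk0; move: h2; rewrite hk0 inE.
  case/existsP => k /andP [nk hk].
  have [i hi] : exists i, i \notin V' k.
    by apply/existsP; move: hk; apply: contraR; rewrite negb_exists => /forallP h;
       apply/eqP/setP => x; rewrite inE; move: (h x); rewrite negbK.
  rewrite (bigD1 i) //=.
  have -> : [forall k1, z i k1 \in V' k1] = false.
    apply/negbTE/negP => /forallP /(_ k); rewrite ffunE (negbTE nk) => hh.
    by move: hi; rewrite hh.
  rewrite mul0r add0r.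
  have : \sum_(j | j != i) ([forall k, z j k \in V' k])%:R * M%:R^-1 <= (M%:R - 1) * M%:R^-1 :> R.
    have -> : (M%:R - 1 : R) = #|[pred j | j != i]|%:R.
      by rewrite cardC1 card_ord -subn1 natrB ?mulr1n //; lia.
    rewrite -sumr_const mulr_suml; apply: ler_sum => j _.
    by case: forallP => _ /=; rewrite ?mul1r ?mul0r //; lra.
  rewrite mulrBl mul1r divff ?gt_eqF //.
- rewrite /ineq_holds LHS RHS (eq_bigr (fun _ => M%:R^-1)); last by move=> i _; rewrite zV mul1r.
  rewrite sumr_const card_ord -[M%:R^-1 *+ M]mulr_natl mulfV ?gt_eqF //.
  rewrite !ffunE eqxx !in_setC1 eqxx m1m /= mul0r add0r mul1r.
  have : 0 < M%:R^-1 :> R by rewrite invr_gt0.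
  lra.
Qed.

End Type2.


Section Type1.
Variable R : realFieldType.

Lemma keyA (x P l c r E d : R) : 0 <= x -> x <= r -> 0 <= P -> P <= 1 -> 0 <= c -> c <= l ->
  0 <= r -> r <= 1 -> l = c + E + d -> r * (E + d) <= E ->
  l * (x * P) <= c * x + E * P.
Proof. move=> *.
have [h|h] := lerP (l * P - c) 0.
  have : x * (l * P - c) <= 0 by rewrite mulr_ge0_le0.
  have : 0 <= E * P.
    have : 0 <= E by nra.
    by move=> ?; rewrite mulr_ge0.
  nra.
have h1 : x * (l * P - c) <= r * (l * P - c) by rewrite ler_wpM2r // ltW.
have h2 : 0 <= r * c * (1 - P) by rewrite !mulr_ge0 // subr_ge0.
have h3 : r * (E + d) * P <= E * P by rewrite ler_wpM2r.
nra.
Qed.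

Lemma frac4 (a n M : nat) : (0 < n)%N -> (n <= M)%N -> (a <= n)%N ->
  [/\ 0 <= (a%:R / n%:R : R), a%:R / n%:R <= 1 :> R,
      (a%:R / n%:R < 1 :> R -> a%:R / n%:R <= 1 - M%:R^-1 :> R),
      (0 < a%:R / n%:R :> R -> M%:R^-1 <= a%:R / n%:R :> R) &
      ((1 <= a%:R / n%:R :> R -> a = n) /\
      (a%:R / n%:R <= 0 :> R -> a = 0%N))].
Proof.
move=> n0 nM an; have [z0 z1 zlt zgt] := frac_bounds R n0 nM an.
have M0 : 0 < M%:R :> R by rewrite ltr0n; lia.
have iM0 : 0 < M%:R^-1 :> R by rewrite invr_gt0.
have n0' : (n%:R : R) != 0 by rewrite pnatr_eq0 -lt0n.
split => //.
- move=> lt1; have [lt|ge] := ltnP a n; first exact: zlt.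
  have e : a = n by lia.
  by move: lt1; rewrite e divff // ltxx.
- move=> gt0; have [a0|a0] := posnP a; last exact: zgt.
  by move: gt0; rewrite a0 mul0r ltxx.
split.
- move=> ge1; have [lt|ge] := ltnP a n; last by lia.
  have := zlt lt; move: ge1 iM0; clear => h1 h2 h3; exfalso; lra.
- move=> le0; have [a0|a0] := posnP a => //.
  have := zgt a0; move: le0 iM0; clear => h1 h2 h3; exfalso; lra.
Qed.

Lemma type1 (M K : nat) (V : {ffun 'I_K -> {set 'I_M}}) : (2 <= M)%N -> (2 <= K)%N ->
  tupleI V -> (exists k k', [/\ k != k', V k != setT & V k' != setT]) ->
  exists (P' : {ffun {ffun 'I_K -> 'I_M} -> R}) (p : {ffun 'I_K * 'I_M -> R}),
    [/\ is_distr P', is_distr p,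
        (forall V', tupleI V' -> V' <> V -> ineq_holds P' p V')
      & ~ ineq_holds P' p V].
Proof.
move=> M2 K2 hI [ka [kb [kab hka hkb]]].
have M0 : 0 < M%:R :> R by rewrite ltr0n; lia.
have K0 : 0 < K%:R :> R by rewrite ltr0n; lia.
have iM0 : 0 < M%:R^-1 :> R by rewrite invr_gt0.
have iM1 : M%:R^-1 <= 1 :> R by rewrite invf_le1 // ler1n; lia.
pose h := (2 * K)%:R^-1 : R.
have h0 : 0 < h by rewrite invr_gt0 ltr0n; lia.
have hK : h + h = K%:R^-1.
  by rewrite /h natrM -mulr2n -mulr_natl; field; rewrite lt0r_neq0.
pose T k := V k != setT.
pose n k := #|V k|.
pose c k := #|~: V k|.
have n0 k : (0 < n k)%N.
  by rewrite card_gt0; case/andP: hI => /forallP /(_ k).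
have nM k : (n k <= M)%N by rewrite /n -[X in (_ <= X)%N]card_ord max_card.
have cM k : (c k <= M)%N by rewrite /c -[X in (_ <= X)%N]card_ord max_card.
have c0 k : T k -> (0 < c k)%N.
  move=> tk; rewrite card_gt0; apply: contra tk => /eqP e.
  by apply/eqP; rewrite -[V k]setCK e setC0.
pose mu k (m : 'I_M) : R := (m \in V k)%:R / (n k)%:R.
pose nu k (m : 'I_M) : R := if T k then (m \notin V k)%:R / (c k)%:R else mu k m.
pose cw k : R := if T k then h else K%:R^-1.
pose dw k : R := if T k then h else 0.
pose C := \sum_k cw k.
pose D := \sum_k dw k.
pose d := h * M%:R^-1 * M%:R^-1.
pose l := C + d.
pose P' : {ffun {ffun 'I_K -> 'I_M} -> R} :=
  [ffun y : {ffun 'I_K -> 'I_M} => l * \prod_k mu k (y k) + (1 - l) * \prod_k nu k (y k)].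
pose p : {ffun 'I_K * 'I_M -> R} := [ffun t => (mu t.1 t.2 + nu t.1 t.2) * h].
pose x (W : {ffun 'I_K -> {set 'I_M}}) k := \sum_(m in W k) mu k m.
pose y (W : {ffun 'I_K -> {set 'I_M}}) k := \sum_(m in W k) nu k m.
have iMM : M%:R^-1 * M%:R^-1 <= M%:R^-1 :> R by rewrite ler_piMl // ltW.
have hx (W : {ffun 'I_K -> {set 'I_M}}) k : x W k = #|W k :&: V k|%:R / (n k)%:R.
  by rewrite /x /mu -mulr_suml sum_ind.
have hy (W : {ffun 'I_K -> {set 'I_M}}) k : T k -> y W k = #|W k :&: ~: V k|%:R / (c k)%:R.
  move=> tk; rewrite /y /nu tk -mulr_suml -sum_ind.
  by congr (_ / _); apply: eq_bigr => m _; rewrite inE.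
have hyn (W : {ffun 'I_K -> {set 'I_M}}) k : ~~ T k -> y W k = x W k.
  by move=> tk; rewrite /y /nu (negbTE tk).
have hxb W k := frac4 (n0 k) (nM k) (subset_leq_card (subsetIr (W k) (V k))).
have hyb W k : T k -> _ := fun tk => frac4 (c0 k tk) (cM k) (subset_leq_card (subsetIr (W k) (~: V k))).
have sub_eq (A B : {set 'I_M}) : #|A :&: B| = #|B| -> B \subset A.
  move=> e; have := subset_leqif_cards (subsetIr A B); rewrite e => -[_].
  by rewrite eqxx => /esym /eqP /setIidPr.
have sub0 (A B : {set 'I_M}) : #|A :&: ~: B| = 0%N -> A \subset B.
  by move/eqP; rewrite cards_eq0 -setDE setD_eq0.
have fullT (A B : {set 'I_M}) : B \subset A -> ~: B \subset A -> A = setT.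
  move=> s1 s2; apply/setP => m; rewrite inE.
  by case: (boolP (m \in B)) => hm; [apply: (subsetP s1) | apply: (subsetP s2); rewrite inE].
have hL (W : {ffun 'I_K -> {set 'I_M}}) : \sum_(y0 : {ffun 'I_K -> 'I_M} | [forall k, y0 k \in W k]) P' y0
    = l * \prod_k x W k + (1 - l) * \prod_k y W k.
  rewrite (eq_bigr (fun y0 : {ffun 'I_K -> 'I_M} =>
       l * \prod_k mu k (y0 k) + (1 - l) * \prod_k nu k (y0 k))); last by move=> y0 _; rewrite ffunE.
  by rewrite big_split /= -!mulr_sumr !box_sum.
have hR (W : {ffun 'I_K -> {set 'I_M}}) : \sum_k \sum_(m in W k) p (k, m) = \sum_k (cw k * x W k + dw k * y W k).
  apply: eq_bigr => k _.
  rewrite (eq_bigr (fun m => (mu k m + nu k m) * h)); last by move=> m _; rewrite ffunE.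
  rewrite -mulr_suml big_split /= -/(x W k) -/(y W k) /cw /dw.
  case: (boolP (T k)) => tk; first by ring.
  by rewrite hyn // -hK; ring.
have cwdw k : cw k + dw k = K%:R^-1.
  by rewrite /cw /dw; case: (T k); rewrite ?addr0.
have CD : C + D = 1.
  rewrite /C /D -big_split /= (eq_bigr (fun _ => K%:R^-1)) //.
  by rewrite sumr_const card_ord -[K%:R^-1 *+ K]mulr_natl mulfV // gt_eqF.
have dw0 k : 0 <= dw k by rewrite /dw; case: (T k); [exact: ltW | exact: lexx].
have cwh k : h <= cw k by rewrite /cw; case: (T k); [exact: lexx | rewrite -hK lerDl ltW].
have cw0 k : 0 <= cw k by apply: le_trans (cwh k); rewrite ltW.
have Dh : h <= D.
  have -> : h = dw ka by rewrite /dw /T hka.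
  exact: sum_ge_term.
have d0 : 0 <= d by rewrite /d !mulr_ge0 // ltW.
have dh : d <= h * M%:R^-1.
  by rewrite /d -mulrA; apply: ler_wpM2l; [exact: ltW | exact: iMM].
have dh' : h * M%:R^-1 <= h by rewrite -[leRHS]mulr1; apply: ler_wpM2l; [exact: ltW | exact: iM1].
have l1 : l <= 1 by rewrite /l; lra.
have l0 : 0 <= l by rewrite /l addr_ge0 // sumr_ge0.
have mu0 k m : 0 <= mu k m by rewrite /mu divr_ge0 ?ler0n.
have nu0 k m : 0 <= nu k m by rewrite /nu; case: (T k); rewrite ?divr_ge0 ?ler0n.
have xT k : x [ffun => setT] k = 1.
  by rewrite hx ffunE setTI -/(n k) divff // pnatr_eq0 -lt0n n0.
have yT k : y [ffun => setT] k = 1.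
  case: (boolP (T k)) => tk; last by rewrite hyn.
  by rewrite hy // ffunE setTI -/(c k) divff // pnatr_eq0 -lt0n c0.
have allT (F : {ffun 'I_K -> 'I_M} -> R) : \sum_y0 F y0 = \sum_(y0 : {ffun 'I_K -> 'I_M} | [forall k, y0 k \in [ffun => setT] k]) F y0.
  by apply: eq_bigl => y0; apply/esym/forallP => k; rewrite ffunE inE.
have dP : is_distr P'.
  split.
    by move=> y0; rewrite ffunE addr_ge0 // mulr_ge0 ?subr_ge0 // prodr_ge0.
  rewrite allT hL.
  have -> : \prod_k x [ffun => setT] k = 1 by apply: big1 => k _; exact: xT.
  have -> : \prod_k y [ffun => setT] k = 1 by apply: big1 => k _; exact: yT.
  rewrite !mulr1; lra.
have dp : is_distr p.
  split.
    by move=> t; rewrite ffunE; apply: mulr_ge0; [exact: addr_ge0 | exact: ltW].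
  rewrite pair_sum.
  have := hR [ffun => setT].
  rewrite (eq_bigr (fun k => \sum_m p (k, m))); last first.
    by move=> k _; apply: eq_bigl => m; rewrite ffunE inE.
  by move=> ->; rewrite (eq_bigr (fun k => cw k + dw k)) ?big_split // => k _; rewrite xT yT !mulr1.
have viol : ~ ineq_holds P' p V.
  rewrite /ineq_holds hL hR.
  have xV k : x V k = 1 by rewrite hx setIid -/(n k) divff // pnatr_eq0 -lt0n n0.
  rewrite big1 ?mulr1; last by move=> k _; rewrite xV.
  rewrite (bigD1 ka) //= hy // setICr cards0 mul0r mul0r mulr0 addr0.
  rewrite (eq_bigr (fun k => cw k)); last first.
    move=> k _; rewrite xV mulr1 /dw; case: (boolP (T k)) => tk.
      by rewrite hy // setICr cards0 mul0r mulr0 addr0.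
    by rewrite mul0r addr0.
  have : 0 < d by rewrite /d !mulr_gt0.
  rewrite /l -/C; lra.
exists P', p; split => //.
move=> V' hI' nV; rewrite /ineq_holds hL hR big_split /=.
have xr k : [/\ 0 <= x V' k, x V' k <= 1 & (x V' k < 1 -> x V' k <= 1 - M%:R^-1)].
  by rewrite hx; case: (hxb V' k).
have yr k : [/\ 0 <= y V' k, y V' k <= 1, (y V' k < 1 -> y V' k <= 1 - M%:R^-1)
             & (0 < y V' k -> M%:R^-1 <= y V' k)].
  case: (boolP (T k)) => tk; first by rewrite hy //; case: (hyb V' k tk).
  by rewrite hyn // hx; case: (hxb V' k).
have x01 k : 0 <= x V' k <= 1 by case: (xr k) => -> ->.
have y01 k : 0 <= y V' k <= 1 by case: (yr k) => -> ->.
have Y0 : 0 <= \prod_k y V' k by apply: prodr_ge0 => k _; case/andP: (y01 k).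
have CDe : C = 1 - D by lra.
have [[j hj] | hall] : (exists j, x V' j < 1) \/ (forall j, 1 <= x V' j).
  case: (pickP (fun j => x V' j < 1)) => [j hj | hn]; first by left; exists j.
  by right => j; rewrite leNgt hn.
- have hy1 : (1 - l) * \prod_k y V' k <= \sum_k dw k * y V' k.
    have e1 : D * \prod_k y V' k <= \sum_k dw k * y V' k.
      rewrite /D mulr_suml; apply: ler_sum => k _; apply: ler_wpM2l => //.
      exact: prod_le_factor.
    have : (1 - l) * \prod_k y V' k <= D * \prod_k y V' k.
      by apply: ler_wpM2r => //; rewrite /l; lra.
    lra.
  have hx1 : l * \prod_k x V' k <= \sum_k cw k * x V' k.
    pose i := if ka == j then kb else ka.
    have ij : i != j by rewrite /i; case: (eqVneq ka j) => [<- | //]; rewrite eq_sym.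
    pose E := \sum_(k | k != j) cw k.
    have eC : C = cw j + E by rewrite /C (bigD1 j).
    have Eh : h <= E.
      rewrite /E (bigD1 i) //= ; apply: le_trans (cwh i) _; rewrite lerDl.
      by apply: sumr_ge0 => k _; exact: cw0.
    pose P := \prod_(k | k != j) x V' k.
    have P01 : 0 <= P <= 1 by apply: prod01.
    case/andP: P01 => P0 P1.
    have eX : \prod_k x V' k = x V' j * P by rewrite (bigD1 j).
    have eS : \sum_k cw k * x V' k = cw j * x V' j + \sum_(k | k != j) cw k * x V' k.
      by rewrite (bigD1 j).
    have eS2 : E * P <= \sum_(k | k != j) cw k * x V' k.
      rewrite /E mulr_suml; apply: ler_sum => k kj; apply: ler_wpM2l => //.
      exact: prod_le_factorP.
    rewrite eX eS.
    case: (xr j) => xj0 _ /(_ hj) xjr.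
    have cl : cw j <= l by rewrite /l eC; have := cw0 j; lra.
    have hr : (1 - M%:R^-1) * (E + d) <= E.
      have : h * M%:R^-1 <= E * M%:R^-1 by rewrite ler_wpM2r // ltW.
      have : 0 <= M%:R^-1 * d by rewrite mulr_ge0 // ltW.
      nra.
    have r0 : 0 <= 1 - M%:R^-1 :> R by rewrite subr_ge0.
    have r1 : 1 - M%:R^-1 <= 1 :> R by rewrite lerBlDr lerDl ltW.
    have el : l = cw j + E + d by rewrite /l eC.
    have H := keyA xj0 xjr P0 P1 (cw0 j) cl r0 r1 el hr.
    lra.
  lra.
- have sub k : V k \subset V' k.
    have [_ _ _ _ [e1 _]] := hxb V' k.
    by apply: sub_eq; apply: e1; rewrite -hx; exact: hall.
  have x1 k : x V' k = 1 by case/andP: (x01 k) => _ h1; apply/eqP; rewrite eq_le h1 hall.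
  have -> : \prod_k x V' k = 1 by apply: big1 => k _; exact: x1.
  have -> : \sum_k cw k * x V' k = C by apply: eq_bigr => k _; rewrite x1 mulr1.
  case/andP: hI' => _ /existsP [lz hlz].
  have tlz : T lz.
    rewrite /T; apply: contra hlz => /eqP e.
    by rewrite eqEsubset subsetT /= -e; exact: sub lz.
  have ylz : y V' lz <= 1 - M%:R^-1.
    case: (yr lz) => _ _ hlt _; apply: hlt; rewrite ltNge; apply/negP => h1.
    have [_ _ _ _ [e1 _]] := hyb V' lz tlz.
    have := sub_eq _ _ (e1 _); rewrite -hy // => /(_ h1) s2.
    by move: hlz; rewrite (fullT _ _ (sub lz) s2) eqxx.
  have : [exists j, T j && (0 < y V' j)].
    apply: contraT => /existsPn hn; exfalso; apply: nV; apply/ffunP => k.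
    apply/eqP; rewrite eqEsubset sub andbT.
    case: (boolP (T k)) => tk; last by rewrite (eqP (negbNE tk)) subsetT.
    move: (hn k); rewrite tk /= -leNgt => y0.
    have [_ _ _ _ [_ e0]] := hyb V' k tk.
    by apply: sub0; apply: e0; rewrite -hy.
  case/existsP => j /andP [tj yj].
  pose i := if ka == lz then kb else ka.
  have il : i != lz by rewrite /i; case: (eqVneq ka lz) => [<- | //]; rewrite eq_sym.
  have ti : T i by rewrite /i /T; case: (ka == lz).
  pose Y := \prod_k y V' k.
  have gge k : 0 <= dw k * (y V' k - Y).
    apply: mulr_ge0 => //; rewrite subr_ge0; exact: prod_le_factor.
  have esum : \sum_k dw k * y V' k = \sum_k dw k * (y V' k - Y) + D * Y.
    rewrite /D mulr_suml -big_split /=; apply: eq_bigr => k _; ring.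
  have key : d <= \sum_k dw k * (y V' k - Y).
    case: (yr i) => yi0 _ _ yig.
    have [yipos | yineg] := ltP 0 (y V' i).
      apply: le_trans (sum_ge_term i gge).
      have : Y <= y V' i * y V' lz by apply: prod_le_two.
      have := yig yipos.
      have dwi : dw i = h by rewrite /dw ti.
      rewrite dwi => h1 h2.
      have h3 : M%:R^-1 * M%:R^-1 <= y V' i * (1 - y V' lz).
        apply: ler_pM => //; [exact: ltW | exact: ltW | lra].
      have h4 : h * (M%:R^-1 * M%:R^-1) <= h * (y V' i * (1 - y V' lz)).
        by apply: ler_wpM2l => //; exact: ltW.
      have h5 : h * (y V' i * (1 - y V' lz)) <= h * (y V' i - Y).
        apply: ler_wpM2l; first exact: ltW.
        lra.
      rewrite /d -mulrA; lra.
    have YY : Y = 0.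
      have : Y <= y V' i by apply: prod_le_factor.
      move=> h1; apply/eqP; rewrite eq_le Y0 andbT; lra.
    apply: le_trans (sum_ge_term j gge).
    rewrite YY subr0 /dw tj.
    have := (yr j); case=> _ _ _ /(_ yj) h1.
    have : h * M%:R^-1 <= h * y V' j by apply: ler_wpM2l => //; exact: ltW.
    lra.
  rewrite esum -/Y.
  have : 0 <= d * Y by apply: mulr_ge0.
  rewrite /l CDe; lra.
Qed.

End Type1.


Section Count.
Variables (M K Q : nat).
Hypothesis M2 : (2 <= M)%N.

Definition Cs : {set {set 'I_M}} := [set [set~ m] | m : 'I_M].
Definition Bset : {set {set 'I_M}} := ~: (set0 |: (setT |: Cs)).

Lemma setC1_inj : injective (fun m : 'I_M => [set~ m]).
Proof.
move=> m m' e; apply/eqP; apply: contraT => nm.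
have : m' \in [set~ m] by rewrite in_setC1 eq_sym.
by rewrite e setC11.
Qed.

Lemma setC1_neqT (m : 'I_M) : [set~ m] != setT.
Proof. by apply/eqP => e; move: (in_setT m); rewrite -e setC11. Qed.

Lemma card_Cs : #|Cs| = M.
Proof. by rewrite card_imset ?card_ord //; exact: setC1_inj. Qed.

Lemma card_Bset : #|Bset| = (2 ^ M - M - 2)%N.
Proof.
have hT : #|[set: {set 'I_M}]| = (2 ^ M)%N by rewrite -powersetT card_powerset cardsT card_ord.
have h0T : (set0 : {set 'I_M}) != setT.
  have h0 : (0 < M)%N by lia.
  by apply/eqP => e; move: (in_setT (Ordinal h0)); rewrite -e inE.
have e1 : #|set0 |: (setT |: Cs)| = (M + 2)%N.
  rewrite cardsU1 cardsU1 card_Cs.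
  have -> : (setT : {set 'I_M}) \notin Cs.
    by apply/imsetP => -[m _ e]; move: (setC1_neqT m); rewrite -e eqxx.
  have -> : (set0 : {set 'I_M}) \notin setT |: Cs.
    rewrite !inE negb_or h0T /=; apply/imsetP => -[m _ e].
    by move: (setC1_neq0 m M2); rewrite -e eqxx.
  by rewrite /=; lia.
have := cardsC (set0 |: (setT |: Cs)); rewrite -/Bset e1 -cardsT hT => e.
by rewrite -e; move: #|Bset| => b; lia.
Qed.

Definition fV (kA : 'I_K * {set 'I_M}) : {ffun 'I_K -> {set 'I_M}} :=
  [ffun k => if k == kA.1 then kA.2 else setT].

Lemma inBset (A : {set 'I_M}) :
  (A \in Bset) = [&& A != set0, A != setT & ~~ [exists m, A == [set~ m]]].
Proof.
rewrite !inE !negb_or; congr (_ && (_ && _)); congr negb.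
by apply/imsetP/existsP => [[m _ ->]|[m /eqP ->]]; exists m.
Qed.

Lemma bad_image :
  [set V : {ffun 'I_K -> {set 'I_M}} | tupleI V && ~~ tupleS V] = fV @: setX setT Bset.
Proof.
apply/setP => V; rewrite inE; apply/andP/imsetP.
- move=> [hI hS]; have [k [hk hfull]] := notS_single hI hS.
  exists (k, V k).
    rewrite inE /= in_setT inBset hk /=; apply/andP; split.
      by case/andP: hI => /forallP /(_ k).
    apply/existsP => -[m /eqP e]; move: hS; rewrite /tupleS hI /=.
    apply/negP/negPn/orP; right; apply/existsP; exists k; apply/existsP; exists m.
    rewrite e eqxx /=; apply/forallP => k'; apply/implyP => nk; rewrite hfull //.
  apply/ffunP => k'; rewrite ffunE /=; case: eqVneq => [-> //|nk]; exact: hfull.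
- move=> [[k A]]; rewrite inE /= in_setT inBset /= => /and3P [hA0 hAT hAc] ->.
  have hI : tupleI (fV (k, A)).
    apply/andP; split.
      apply/forallP => k'; rewrite ffunE; case: ifP => // _.
      have h0 : (0 < M)%N by lia.
      by apply/set0Pn; exists (Ordinal h0); rewrite inE.
    by apply/existsP; exists k; rewrite ffunE eqxx.
  split => //; rewrite /tupleS hI /= negb_or; apply/andP; split.
    apply/existsP => -[a /existsP [b /and3P [ab ha hb]]].
    move: ha hb; rewrite !ffunE /=.
    case: (eqVneq a k) => [ea|na]; last by rewrite eqxx.
    case: (eqVneq b k) => [eb|nb]; last by rewrite eqxx.
    by move: ab; rewrite ea eb eqxx.
  apply/existsP => -[a /existsP [m /andP [ha /forallP hall]]].
  move: ha; rewrite ffunE /=; case: (eqVneq a k) => [ea|na] ha.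
    by move: hAc; rewrite negb_exists => /forallP /(_ m); rewrite ha.
  move: (hall k); rewrite eq_sym na /= ffunE eqxx => hk.
  by move: hAT; rewrite hk.
Qed.

Lemma card_bad :
  #|[set V : {ffun 'I_K -> {set 'I_M}} | tupleI V && ~~ tupleS V]| = (K * (2 ^ M - M - 2))%N.
Proof.
rewrite bad_image card_in_imset ?cardsX ?cardsT ?card_ord ?card_Bset //.
move=> [k A] [k' A']; rewrite !in_setX /= !in_setT !inBset /= => /and3P [_ hA _] /and3P [_ hA' _] e.
have := congr1 (fun f : {ffun 'I_K -> {set 'I_M}} => f k) e; rewrite /= !ffunE /= eqxx.
case: (eqVneq k k') => [ek|nk] /= eA; first by rewrite ek eA.
by move: hA; rewrite eA eqxx.
Qed.

Lemma counting :
  famS M K Q \subset famI M K Q /\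
  #|famI M K Q| = (#|famS M K Q| + Q * K * (2 ^ M - M - 2))%N.
Proof.
have sub : famS M K Q \subset famI M K Q.
  by apply/subsetP => -[z V]; rewrite !inE /tupleS => /andP [].
split => //.
rewrite -(cardsID (famS M K Q) (famI M K Q)) (setIidPr sub).
congr (_ + _)%N.
have -> : famI M K Q :\: famS M K Q =
          setX [set: 'I_Q] [set V : {ffun 'I_K -> {set 'I_M}} | tupleI V && ~~ tupleS V].
  by apply/setP => -[z V]; rewrite !inE /= andbC.
by rewrite cardsX cardsT card_ord card_bad mulnA.
Qed.

End Count.


Theorem theorem2 (R : realFieldType) (M K Q : nat) :
  (2 <= M)%N -> (2 <= K)%N -> (1 <= Q)%N ->
  (* equivalence: S and I define the same set of (P', P(.,.|Z)) *)
  (forall (P' : {ffun {ffun 'I_K -> 'I_M} -> R}) (P : 'I_Q -> {ffun 'I_K * 'I_M -> R}),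
     is_distr P' -> (forall z, is_distr (P z)) ->
     ((forall zV, zV \in famI M K Q -> ineq_holds P' (P zV.1) zV.2) <->
      (forall zV, zV \in famS M K Q -> ineq_holds P' (P zV.1) zV.2)))
  /\
  (* non-redundancy: within each z-polytope, every inequality of S can be
     violated while all other inequalities of S with index z (and the
     simplex constraints) hold *)
  (forall zV, zV \in famS M K Q ->
     exists (P' : {ffun {ffun 'I_K -> 'I_M} -> R}) (p : {ffun 'I_K * 'I_M -> R}),
       [/\ is_distr P', is_distr p,
           (forall zV', zV' \in famS M K Q -> zV'.1 = zV.1 -> zV' <> zV ->
              ineq_holds P' p zV'.2)
         & ~ ineq_holds P' p zV.2])
  /\
  (* counting: S has Q K (2^M - M - 2) fewer inequalities than I *)
  (famS M K Q \subset famI M K Q /\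
   #|famI M K Q| = (#|famS M K Q| + Q * K * (2 ^ M - M - 2))%N).
Proof.
move=> M2 K2 Q1; split; [|split].
- move=> P' P dP dz; split => h zV hzV.
    by apply: h; move: hzV; rewrite !inE /tupleS => /andP [].
  case: zV hzV => z V; rewrite inE /= => hI.
  apply: (S_implies_I M2 dP (dz z)) => // V' hS'.
  by apply: (h (z, V')); rewrite inE.
- move=> [z V]; rewrite inE /= => hS.
  case/andP: (hS) => hI /orP [c1 | c2].
    case/existsP: c1 => k /existsP [k' /and3P [kk hk hk']].
    have [P' [p [dP dp hall hv]]] := type1 R M2 K2 hI (ex_intro _ k (ex_intro _ k' (And3 kk hk hk'))).
    exists P', p; split => // -[z' V'] hS' /= ez ne; apply: hall.
      by move: hS'; rewrite inE /= /tupleS => /andP [].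
    by move=> eV; apply: ne; rewrite ez eV.
  case/existsP: c2 => k /existsP [m /andP [/eqP hk /forallP hf]].
  have eV : V = V2 k m.
    apply/ffunP => k'; rewrite ffunE; case: (eqVneq k' k) => [-> // | nk].
    by apply/eqP; move: (hf k'); rewrite nk.
  have [P' [p [dP dp hall hv]]] := type2 R k m M2.
  exists P', p; split => //; last by rewrite /= eV.
  move=> -[z' V'] hS' /= ez ne; apply: hall.
    by move: hS'; rewrite inE.
  by move=> eV'; apply: ne; rewrite ez eV eV'.
- exact: counting.
Qed.
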